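(* The category $\mathrm{OS}_B^{\mathrm{op}}$ is Gröbner, and, with the norm $\nu([-n,n])=n$, it is $\mathsf{O}$-lingual with respect to the maps $\iota_{(E,\sigma)}:|(\mathrm{OS}_B^{\mathrm{op}})_{(E,\sigma)}|\to E^\star$.
   Context: $\mathrm{OS}_B$: objects $(E,\sigma)$ with $E$ totally ordered finite, $\sigma$ an order-reversing involution with unique fixed point $0$; $-e:=\sigma(e)$, $E^+=\{e>0\}$, $|e|=\max\{\pm e\}$, $\mathrm{init}\,D=\min\{|e|:e\in D\}$; morphisms are surjective equivariant maps with (i) $\mathrm{init}\,\varphi^{-1}(e)\in\varphi^{-1}(e)$ for $e\in E_2^+$ and (ii) $\mathrm{init}\,\varphi^{-1}(e)<\mathrm{init}\,\varphi^{-1}(f)$ for $e<f\in E_2^+$. Every object is uniquely isomorphic to some $[-n,n]$. For a category $\mathcal C$ and object $x$, morphisms $\varphi:x\to y$, $\varphi':x\to y'$ satisfy $\varphi\le\varphi'$ if $\varphi'=\psi\circ\varphi$ for some $\psi$; $|\mathcal C_x|$ is the poset of equivalence classes. $\mathcal C$ is directed if its only endomorphisms are identities; it has (G1) if for every $x$ there is a well order $\prec$ on the set of (isomorphism classes of) morphisms out of $x$ with $\varphi\prec\varphi'\Rightarrow\psi\circ\varphi\prec\psi\circ\varphi'$ whenever defined; (G2) if every $|\mathcal C_x|$ is Noetherian (every upward-closed subset has finitely many minimal elements); Gröbner means directed with (G1) and (G2). A norm $\nu$ assigns a natural number to each isomorphism class of objects; $\mathcal C$ is $\mathsf{O}$-lingual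 if for each $x$ there are a finite set $\Sigma_x$ and an injection $\iota_x:|\mathcal C_x|\to\Sigma_x^\star$ such that $\iota_x(\varphi:x\to y)$ has length $\nu(y)$ and $\iota_x(I)$ is an ordered language for every upward-closed $I$. Ordered languages on $\Sigma$: the smallest collection of subsets of $\Sigma^\star$ containing singletons and $\Pi^\star$ ($\Pi\subset\Sigma$) and closed under finite unions and concatenations. Here $\Sigma_{(E,\sigma)}=E$ and, for an $\mathrm{OS}_B$-morphism $\varphi:[-n,n]\to(E,\sigma)$ (a morphism out of $(E,\sigma)$ in $\mathrm{OS}_B^{\mathrm{op}}$), $\iota_{(E,\sigma)}(\varphi)=\varphi(1)\cdots\varphi(n)$. *)

(* Defs.v *)
(* Skeletal model of OS_B: the object [-n,n] is encoded by
   n : nat; its elements are the ordinals 'I_(2n+1), the ordinal i standing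
   for the integer i - n.  The involution sigma (e |-> -e) is rev_ord. *)
From mathcomp Require Import all_boot all_order all_algebra.
Set Implicit Arguments. Unset Strict Implicit. Unset Printing Implicit Defensive.
Import Order.TTheory GRing.Theory Num.Theory.

Definition elt (n : nat) := 'I_(n.*2.+1).

Definition toZ {n : nat} (i : elt n) : int := (Posz (nat_of_ord i) - Posz n)%R.

Definition sigma {n : nat} (i : elt n) : elt n := rev_ord i.

Definition fib {m n : nat} (f : {ffun elt m -> elt n}) (e : elt n) : elt m -> Prop :=
  fun d => f d = e.

Definition is_init {m : nat} (D : elt m -> Prop) (k : nat) : Prop :=
  (exists d, D d /\ absz (toZ d) = k) /\ (forall d, D d -> (k <= absz (toZ d))%N).

(* init D \in D : the element of value init D (which is >= 0) lies in D *)
Definition init_in {m : nat} (D : elt m -> Prop) : Prop :=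
  exists k, is_init D k /\ exists d, D d /\ toZ d = Posz k.

Definition isOSB {m n : nat} (f : {ffun elt m -> elt n}) : Prop :=
  (forall j : elt n, exists i : elt m, f i = j) /\
  (forall i : elt m, f (sigma i) = sigma (f i)) /\
  (forall e : elt n, (0 < toZ e)%R -> init_in (fib f e)) /\
  (forall e e' : elt n, (0 < toZ e)%R -> (toZ e < toZ e')%R ->
     forall k k', is_init (fib f e) k -> is_init (fib f e') k' -> (k < k')%N).

Definition compB {p m n : nat} (f : {ffun elt m -> elt n}) (h : {ffun elt p -> elt m})
  : {ffun elt p -> elt n} := [ffun i => f (h i)].

(* A morphism out of [-n,n] in OS_B^op, with target [-m,m], is an
   OS_B-morphism [-m,m] -> [-n,n]. *)
Definition arr (n : nat) := {m : nat & {ffun elt m -> elt n}}.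

Definition valid {n : nat} (a : arr n) : Prop := isOSB (projT2 a).

(* a <= b in |(OS_B^op)_n| : b = psi o_op a for some psi, i.e. b = a \o h in OS_B *)
Definition arr_le {n : nat} (a b : arr n) : Prop :=
  exists h : {ffun elt (projT1 b) -> elt (projT1 a)},
    isOSB h /\ projT2 b = compB (projT2 a) h.

Definition arr_equiv {n : nat} (a b : arr n) : Prop := arr_le a b /\ arr_le b a.

Definition OSBop_directed : Prop :=
  forall (n : nat) (f : {ffun elt n -> elt n}), isOSB f -> f = [ffun i => i].

Definition well_order_on {T : Type} (V : T -> Prop) (lt : T -> T -> Prop) : Prop :=
  (forall a, V a -> ~ lt a a) /\
  (forall a b c, V a -> V b -> V c -> lt a b -> lt b c -> lt a c) /\
  (forall a b, V a -> V b -> a = b \/ lt a b \/ lt b a) /\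
  (forall a, V a -> Acc (fun x y => V x /\ V y /\ lt x y) a).

(* (G1). Isomorphism classes of morphisms out of [-n,n] are the morphisms
   themselves, since the model is skeletal and automorphisms are trivial. *)
Definition OSBop_G1 : Prop :=
  forall n : nat, exists lt : arr n -> arr n -> Prop,
    well_order_on (@valid n) lt /\
    forall (m p : nat) (f g : {ffun elt m -> elt n}) (h : {ffun elt p -> elt m}),
      isOSB f -> isOSB g -> isOSB h ->
      lt (existT _ m f) (existT _ m g) ->
      lt (existT _ p (compB f h)) (existT _ p (compB g h)).

Definition upclosed {n : nat} (I : arr n -> Prop) : Prop :=
  (forall a, I a -> valid a) /\
  (forall a b, valid b -> I a -> arr_le a b -> I b).

Definition minimal_in {n : nat} (I : arr n -> Prop) (a : arr n) : Prop :=
  I a /\ forall b, I b -> arr_le b a -> arr_le a b.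

(* (G2): every upward-closed subset has finitely many minimal elements
   (counted up to equivalence, i.e. in the poset |(OS_B^op)_n|). *)
Definition OSBop_G2 : Prop :=
  forall (n : nat) (I : arr n -> Prop), upclosed I ->
    exists S : seq (arr n),
      (forall s, s \in S -> minimal_in I s) /\
      (forall a, minimal_in I a -> exists2 s, s \in S & arr_equiv a s).

Definition OSBop_Grobner : Prop := OSBop_directed /\ OSBop_G1 /\ OSBop_G2.

Definition lang (Sigma : Type) := seq Sigma -> Prop.

Inductive ordered_lang {Sigma : Type} : lang Sigma -> Prop :=
  | OL_single (w : seq Sigma) : ordered_lang (fun u => u = w)
  | OL_star (Pi : pred Sigma) : ordered_lang (fun u => all Pi u)
  | OL_empty : ordered_lang (fun _ => False)      (* empty finite union *)
  | OL_union (L1 L2 : lang Sigma) : ordered_lang L1 -> ordered_lang L2 ->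
      ordered_lang (fun u => L1 u \/ L2 u)
  | OL_cat (L1 L2 : lang Sigma) : ordered_lang L1 -> ordered_lang L2 ->
      ordered_lang (fun u => exists u1 u2, u = u1 ++ u2 /\ L1 u1 /\ L2 u2)
  | OL_ext (L1 L2 : lang Sigma) : (forall u, L1 u <-> L2 u) ->
      ordered_lang L1 -> ordered_lang L2.

(* iota_{[-n,n]}(phi : [-m,m] -> [-n,n]) = phi(1) phi(2) ... phi(m) in E^* *)
Definition iota_word {n : nat} (a : arr n) : seq (elt n) :=
  let m := projT1 a in
  [seq projT2 a (inord (m + k) : elt m) | k <- iota 1 m].

Definition nu (m : nat) : nat := m.

Definition OSBop_Olingual_wrt_iota : Prop :=
  forall n : nat,
    (forall a b : arr n, valid a -> valid b -> iota_word a = iota_word b -> arr_equiv a b) /\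
    (forall a : arr n, valid a -> size (iota_word a) = nu (projT1 a)) /\
    (forall I : arr n -> Prop, upclosed I ->
       ordered_lang (fun w : seq (elt n) => exists a, I a /\ w = iota_word a)).

(* Main.v *)
Require Import Defs.
From mathcomp Require Import all_boot all_order all_algebra.
From Stdlib Require Import ClassicalEpsilon Classical.
From mathcomp Require Import zify.
Set Implicit Arguments. Unset Strict Implicit. Unset Printing Implicit Defensive.
Import Order.TTheory GRing.Theory Num.Theory.

Definition ofZ {m : nat} (z : int) : elt m := inord (absz (z + Posz m)%R).

Lemma toZ_ofZ m (z : int) : (absz z <= m)%N -> toZ (ofZ (m:=m) z) = z.
Proof.
move=> H; rewrite /toZ /ofZ inordK; last by lia.
lia.
Qed.

Lemma ofZ_toZ m (d : elt m) : ofZ (toZ d) = d.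
Proof.
apply: val_inj; rewrite /= /ofZ /toZ inordK; have := ltn_ord d; lia.
Qed.

Lemma toZ_bound m (d : elt m) : (absz (toZ d) <= m)%N.
Proof. rewrite /toZ; have := ltn_ord d; lia. Qed.

Lemma toZ_inj m : injective (@toZ m).
Proof. by move=> a b H; rewrite -(ofZ_toZ a) -(ofZ_toZ b) H. Qed.

Lemma toZ_sigma m (d : elt m) : toZ (sigma d) = (- toZ d)%R.
Proof. rewrite /toZ /sigma /=; have := ltn_ord d; lia. Qed.

Definition fo (e : nat) (w : seq int) : nat := find (fun z : int => absz z == e) w.

Definition Crel (k n : nat) (y : seq int) : Prop :=
  all (fun z : int => (absz z <= n)%N) y /\
  (forall e, (k < e <= n)%N -> (fo e y < size y)%N /\ nth 0%R y (fo e y) = Posz e) /\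
  (forall e e', (k < e)%N -> (e < e' <= n)%N -> (fo e y < fo e' y)%N).

Fixpoint Gd (d k : nat) (y : seq int) : Prop :=
  match d with
  | 0 => all (fun z : int => (absz z <= k)%N) y
  | d'.+1 => exists y1 y2, y = y1 ++ Posz k.+1 :: y2 /\
                  all (fun z : int => (absz z <= k)%N) y1 /\ Gd d' k.+1 y2
  end.

Lemma find_cat_cons (P : pred int) y1 x y2 : ~~ has P y1 ->
  find P (y1 ++ x :: y2) = if P x then size y1 else (size y1 + (find P y2).+1)%N.
Proof. by move=> H; rewrite find_cat (negbTE H) /=; case: (P x); rewrite ?addn0. Qed.

Lemma find_le (T : Type) x0 (P : pred T) (y : seq T) j : P (nth x0 y j) -> (find P y <= j)%N.
Proof. move=> H; rewrite leqNgt; apply/negP => /(before_find x0); by rewrite H. Qed.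

Lemma hasNabs (y : seq int) k e : all (fun z : int => (absz z <= k)%N) y -> (k < e)%N ->
  ~~ has (fun z : int => absz z == e) y.
Proof.
move=> /allP H ke; apply/hasPn => z /H; lia.
Qed.

Lemma Gd_Crel d k y : Gd d k y <-> Crel k (k + d) y.
Proof.
elim: d k y => [|d IH] k y /=.
  rewrite addn0; split.
    move=> H; split=> //; split=> e; first lia.
    move=> e'; lia.
  by case.
rewrite -addSnnS; split.
- move=> [y1 [y2 [-> [H1 /IH [A [B C]]]]]].
  have fok : fo k.+1 (y1 ++ Posz k.+1 :: y2) = size y1.
    by rewrite /fo find_cat_cons ?(hasNabs H1) //= eqxx.
  have foe : forall e, (k.+1 < e)%N -> fo e (y1 ++ Posz k.+1 :: y2) = (size y1 + (fo e y2).+1)%N.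
    move=> e ke; rewrite /fo find_cat_cons ?(hasNabs H1) //; last lia.
    by have -> : (absz (Posz k.+1) == e) = false by apply/eqP => /= ?; lia.
  split; [|split].
  + rewrite all_cat /= A andbT; apply/andP; split; last lia.
    by apply: sub_all H1 => z /=; lia.
  + move=> e He; case: (ltngtP e k.+1) => ek; first lia.
      rewrite foe // size_cat /= nth_cat.
      have [/(_ e) Be _] := (conj B C).
      have {}Be := Be ltac:(lia).
      rewrite ifN; last lia.
      have -> : (size y1 + (fo e y2).+1 - size y1 = (fo e y2).+1)%N by lia.
      by split; [lia | exact: Be.2].
    subst e; rewrite fok size_cat /= nth_cat ltnn subnn /=; split=> //; lia.
  + move=> e e' ke He; rewrite (foe e') ?(ltn_trans _ He) //; last lia.
    case: (ltngtP e k.+1) => ek; first lia.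
      rewrite foe //; have := C e e' ek He; lia.
    subst e; rewrite fok; lia.
- move=> [A [B C]].
  have [Bk1 Bk2] := B k.+1 ltac:(lia).
  set i := fo k.+1 y in Bk1 Bk2.
  have Hy : y = take i y ++ Posz k.+1 :: drop i.+1 y.
    by rewrite -Bk2 -drop_nth // cat_take_drop.
  have H1 : all (fun z : int => (absz z <= k)%N) (take i y).
    apply/allP => z /(nthP 0%R) [j]; rewrite size_take Bk1 => ji <-.
    rewrite nth_take //.
    have nk : (absz (nth 0%R y j) == k.+1) = false.
      by have := before_find 0%R ji; rewrite /= => ->.
    have : (absz (nth 0%R y j) <= k.+1 + d)%N by apply: (allP A); apply: mem_nth; exact: ltn_trans ji Bk1.
    move=> Hle; case: (leqP (absz (nth 0%R y j)) k) => // Hgt.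
    have Hgt' : (k.+1 < absz (nth 0%R y j))%N by move/eqP: nk; lia.
    have := C k.+1 _ (ltnSn k) (introT andP (conj Hgt' Hle)).
    have := @find_le _ 0%R (fun z : int => absz z == absz (nth 0%R y j)) y j (eqxx _).
    rewrite -/(fo _ y) -/i; lia.
  have foe : forall e, (k.+1 < e)%N -> fo e y = (i + (fo e (drop i.+1 y)).+1)%N.
    move=> e ke; rewrite /fo {1}Hy find_cat_cons ?(hasNabs H1) //; last lia.
    rewrite size_take Bk1.
    by have -> : (absz (Posz k.+1) == e) = false by apply/eqP => /= ?; lia.
  exists (take i y), (drop i.+1 y); split=> //; split=> //.
  apply/IH; split; [|split].
  + by apply/allP => z /mem_drop /(allP A).
  + move=> e He; have [Be1 Be2] := B e ltac:(lia).
    have := foe e ltac:(lia); rewrite size_drop nth_drop => E; split; first lia.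
    by rewrite -Be2 E; congr nth; lia.
  + move=> e e' ke He; have := C e e' ltac:(lia) He.
    rewrite (foe e) ?(foe e') //; lia.
Qed.

Definition exts (u : seq int) (z : int) : int :=
  match z with Posz 0 => 0%R | Posz k.+1 => nth 0%R u k | Negz k => (- nth 0%R u k)%R end.

Lemma abs_exts u z : absz (exts u z) = if z == 0%R then 0%N else absz (nth 0%R u (absz z).-1).
Proof. by case: z => [[|k]|k] //=; rewrite abszN. Qed.

Lemma find_eq (T : Type) x0 (P : pred T) (y : seq T) t : (t < size y)%N -> P (nth x0 y t) ->
  (forall j, (j < t)%N -> ~~ P (nth x0 y j)) -> find P y = t.
Proof.
move=> ts Pt Hj; apply/eqP; rewrite eqn_leq (find_le Pt) /=.
rewrite leqNgt; apply/negP => /Hj; rewrite nth_find //; rewrite has_find.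
exact: leq_ltn_trans (find_le Pt) ts.
Qed.

Lemma Crel_comp n m u y : size u = m -> Crel 0 n u -> Crel 0 m y ->
  Crel 0 n (map (exts u) y).
Proof.
move=> su [Au [Bu Cu]] [Ay [By Cy]].
have key : forall e, (0 < e <= n)%N ->
    fo e (map (exts u) y) = fo (fo e u).+1 y.
  move=> e He; have [Bu1 Bu2] := Bu e He.
  rewrite /fo find_map; apply: (@find_eq int 0%R).
  - have := By (fo e u).+1 ltac:(lia); rewrite /fo; lia.
  - rewrite /preim /= abs_exts.
    have [_ E] := By (fo e u).+1 ltac:(lia).
    rewrite /fo in E; by rewrite E /= -/(fo e u) Bu2.
  - move=> j jt; rewrite /preim /= abs_exts.
    have [Bt1 Bt2] := By (fo e u).+1 ltac:(lia).
    have jsz : (j < size y)%N by rewrite /fo in Bt1; lia.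
    case: ifP => [_|/eqP zn0]; first by apply/eqP; lia.
    have cpos : (0 < absz (nth 0%R y j))%N by rewrite absz_gt0; apply/eqP.
    set c := absz (nth 0%R y j) in cpos *.
    have cm : (c <= m)%N by apply: (allP Ay); apply: mem_nth.
    case: (ltngtP c (fo e u).+1) => hc.
    + have := @before_find _ 0%R (fun z : int => absz z == e) u c.-1 ltac:(rewrite -/(fo e u); lia).
      by move=> ->.
    + exfalso.
      have := Cy (fo e u).+1 c ltac:(lia) ltac:(lia).
      have := @find_le _ 0%R (fun z : int => absz z == c) y j (eqxx _).
      move=> h1 h2; have := ltn_trans jt (leq_trans h2 h1); by rewrite ltnn.
    + exfalso; have := @before_find _ 0%R (fun z : int => absz z == (fo e u).+1) y j jt.
      by rewrite -/c hc eqxx.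
split; [|split].
- apply/allP => z /mapP [x xy ->]; rewrite abs_exts; case: eqP => // _.
  case: (ltnP (absz x).-1 (size u)) => h; first by apply: (allP Au); apply: mem_nth.
  by rewrite nth_default.
- move=> e He; rewrite key // size_map; have [Bu1 Bu2] := Bu e He.
  have [Bt1 Bt2] := By (fo e u).+1 ltac:(lia).
  split=> //; rewrite (nth_map 0%R) // Bt2 /=; exact: Bu2.
- move=> e e' ke He; rewrite !key; [|lia|lia].
  apply: Cy; first lia.
  have := Cu e e' ke He; have [Bu1 _] := Bu e' ltac:(lia); lia.
Qed.

Definition Sig {n : nat} (pre : seq (elt n)) : pred (elt n) :=
  fun c => (toZ c == 0%R) || has (fun d => absz (toZ d) == absz (toZ c)) pre.

Fixpoint Lrec {n : nat} (pre rest : seq (elt n)) (v : seq (elt n)) : Prop :=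
  match rest with
  | [::] => all (Sig pre) v
  | c :: rest' => exists v1 v2, v = v1 ++ c :: v2 /\ all (Sig pre) v1 /\ Lrec (rcons pre c) rest' v2
  end.

Lemma exts_pos (u : seq int) k : exts u (Posz k.+1) = nth 0%R u k.
Proof. by []. Qed.
Lemma exts_neg (u : seq int) k : exts u (Negz k) = (- nth 0%R u k)%R.
Proof. by []. Qed.

Lemma Sig_pre n (pre rest : seq (elt n)) c :
  Sig pre c <-> exists z : int, (absz z <= size pre)%N /\ exts (map toZ (pre ++ rest)) z = toZ c.
Proof.
have nthE : forall k, (k < size pre)%N -> nth 0%R (map toZ (pre ++ rest)) k = toZ (nth ord0 pre k).
  move=> k hk; rewrite (nth_map ord0); last by rewrite size_cat ltn_addr.
  by rewrite nth_cat hk.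
split.
- case/orP => [/eqP z0|/hasP [d dp /eqP ab]].
    by exists 0%R; split=> //; rewrite z0.
  move: dp => /(nthP ord0) [k kp dk].
  have := toZ_bound d; move: ab; rewrite -dk => ab _.
  have {}ab : absz (toZ (nth ord0 pre k)) = absz (toZ c) :> nat := ab.
  have {}kp : (k < @size (elt n) pre)%N := kp.
  have [hc|hc] : toZ c = toZ (nth ord0 pre k) \/ toZ c = (- toZ (nth ord0 pre k))%R by lia.
  + exists (Posz k.+1); split=> //=.
    by rewrite ?exts_pos nthE.
  + exists (Negz k); split=> //=.
    by rewrite ?exts_neg nthE.
- move=> [z [zb E]]; rewrite /Sig -E.
  clear E; case: z zb => [[|k]|k] zb; first by rewrite eqxx.
  + apply/orP; right; apply/hasP; exists (nth ord0 pre k); first by apply: mem_nth.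
    by rewrite ?exts_pos nthE.
  + apply/orP; right; apply/hasP; exists (nth ord0 pre k); first by apply: mem_nth; exact: zb.
    rewrite exts_neg nthE; last exact: zb.
    by rewrite abszN.
Qed.

Lemma map_cat_inv (A B : Type) (f : A -> B) v a b : map f v = a ++ b ->
  exists v1 v2, v = v1 ++ v2 /\ map f v1 = a /\ map f v2 = b.
Proof.
move=> H; exists (take (size a) v), (drop (size a) v); split; first by rewrite cat_take_drop.
by rewrite map_take map_drop H take_size_cat // drop_size_cat.
Qed.

Lemma preimages n (v : seq (elt n)) (P : pred int) (E : int -> int) :
  (forall c, c \in v -> exists z, P z /\ E z = toZ c) ->
  exists y, all P y /\ map toZ v = map E y.
Proof.
elim: v => [|c v IH] H; first by exists [::].
have [z [Pz Ez]] := H c (mem_head _ _).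
have [y [Py Ey]] := IH (fun d dv => H d (@mem_behead _ (c :: v) _ dv)).
by exists (z :: y); rewrite /= Pz Py Ez Ey.
Qed.

Lemma Lrec_G n (rest pre v : seq (elt n)) :
  Lrec pre rest v <-> exists y, Gd (size rest) (size pre) y /\
                         map toZ v = map (exts (map toZ (pre ++ rest))) y.
Proof.
elim: rest pre v => [|c rest IH] pre v /=.
- split.
  + move=> H; apply: preimages => d dv.
    by have /(@Sig_pre _ pre [::] _) [z [zb Ez]] := allP H d dv; exists z; rewrite zb.
  + move=> [y [Py Ey]]; apply/allP => d dv; apply/(@Sig_pre _ pre [::] _).
    have : toZ d \in map toZ v by apply: map_f.
    rewrite Ey => /mapP [z zy ->]; exists z; split=> //; exact: (allP Py).
- have cat_eq : rcons pre c ++ rest = pre ++ c :: rest by rewrite cat_rcons.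
  split.
  + move=> [v1 [v2 [-> [H1 /IH [y2 [G2 E2]]]]]].
    have [y1 [P1 E1]] : exists y1, all (fun z : int => (absz z <= size pre)%N) y1 /\
        map toZ v1 = map (exts (map toZ (pre ++ c :: rest))) y1.
      apply: preimages => d dv.
      by have /(@Sig_pre _ pre (c :: rest) _) [z [zb Ez]] := allP H1 d dv; exists z; rewrite zb.
    exists (y1 ++ Posz (size pre).+1 :: y2); split.
      by exists y1, y2; split=> //; split=> //; rewrite size_rcons in G2.
    rewrite !map_cat /= E1 E2 cat_eq ?exts_pos; congr (_ ++ _ :: _); try by rewrite map_cat.
    by rewrite nth_cat size_map ltnn subnn.
  + move=> [y [[y1 [y2 [-> [P1 G2]]]] Ey]].
    rewrite map_cat in Ey; have [v1 [v2' [Hv [E1 E2']]]] := map_cat_inv Ey.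
    case: v2' Hv E2' => [|c' v2] //= Hv [Ec E2].
    have cc : c' = c.
      apply: toZ_inj; rewrite Ec /= map_cat nth_cat size_map ltnn subnn //.
    subst c'; exists v1, v2; split=> //; split.
      apply/allP => d dv; apply/(@Sig_pre _ pre (c :: rest) _).
      have : toZ d \in map toZ v1 by apply: map_f.
      rewrite E1 => /mapP [z zy ->]; exists z; split=> //; exact: (allP P1).
    apply/IH; exists y2; split; first by rewrite size_rcons.
    by rewrite cat_eq.
Qed.

Section Trans.
Variables (m n : nat).
Implicit Types (f g : {ffun elt m -> elt n}).

Definition equivar f := forall i : elt m, f (sigma i) = sigma (f i).
Definition intword f : seq int := [seq toZ (f (ofZ (Posz i))) | i <- iota 1 m].

Lemma size_intword f : size (intword f) = m.
Proof. by rewrite size_map size_iota. Qed.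

Lemma nth_intword f k : (k < m)%N -> nth 0%R (intword f) k = toZ (f (ofZ (Posz k.+1))).
Proof. by move=> km; rewrite (nth_map 0%N) ?size_iota // nth_iota // add1n. Qed.

Lemma sigma_ofZ p (z : int) : (absz z <= p)%N -> sigma (ofZ (m:=p) z) = ofZ (- z)%R.
Proof.
move=> H; apply: toZ_inj; rewrite toZ_sigma !toZ_ofZ //; lia.
Qed.

Lemma fE f : equivar f -> forall d, toZ (f d) = exts (intword f) (toZ d).
Proof.
move=> eq d; have db := toZ_bound d.
rewrite -{1}(ofZ_toZ d); case: (toZ d) db => [[|k]|k] /= db.
- have e0 : sigma (ofZ (m:=m) (Posz 0)) = ofZ (Posz 0) by apply: toZ_inj; rewrite toZ_sigma toZ_ofZ.
  have := eq (ofZ (Posz 0)); rewrite e0 => h.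
  have := congr1 toZ h; rewrite toZ_sigma; lia.
- by rewrite nth_intword.
- have -> : ofZ (m:=m) (Negz k) = sigma (ofZ (Posz k.+1)) by rewrite sigma_ofZ.
  by rewrite eq toZ_sigma nth_intword.
Qed.

Lemma ext_det f g : equivar f -> equivar g -> intword f = intword g -> f = g.
Proof.
move=> ef eg H; apply/ffunP => d; apply: toZ_inj; by rewrite !fE // H.
Qed.

Lemma fib_iff f (e : elt n) d : equivar f -> fib f e d <-> exts (intword f) (toZ d) = toZ e.
Proof.
move=> ef; rewrite /fib -fE //; split; [by move=> -> | exact: toZ_inj].
Qed.

Lemma exts_eq_pos (w : seq int) (z : int) (eps : nat) : (0 < eps)%N ->
  exts w z = Posz eps -> z != 0%R /\ absz (nth 0%R w (absz z).-1) = eps.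
Proof.
move=> ep; case: z => [[|k]|k] /= h; [lia| |]; split=> //; lia.
Qed.

Lemma init_iff f (e : elt n) (eps : nat) k : equivar f -> toZ e = Posz eps -> (0 < eps)%N ->
  is_init (fib f e) k <-> (fo eps (intword f) < m)%N /\ k = (fo eps (intword f)).+1.
Proof.
move=> ef te ep; set w := intword f.
have sw : size w = m by exact: size_intword.
have lower : forall d, fib f e d -> (fo eps w < m)%N /\ ((fo eps w).+1 <= absz (toZ d))%N.
  move=> d /(fib_iff _ _ ef); rewrite te => /(exts_eq_pos ep) [nz ab].
  have db := toZ_bound d.
  have := @find_le _ 0%R (fun z : int => absz z == eps) w (absz (toZ d)).-1.
  rewrite ab eqxx -/(fo eps w) => /(_ isT) h.
  have : absz (toZ d) != 0%N by rewrite absz_eq0.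
  lia.
have upper : (fo eps w < m)%N -> exists d, fib f e d /\ absz (toZ d) = (fo eps w).+1.
  move=> fm.
  have hn : absz (nth 0%R w (fo eps w)) = eps.
    by apply/eqP; apply: (@nth_find _ 0%R (fun z : int => absz z == eps)); rewrite has_find sw.
  have [hp|hn'] : nth 0%R w (fo eps w) = Posz eps \/ nth 0%R w (fo eps w) = (- Posz eps)%R by lia.
  - exists (ofZ (Posz (fo eps w).+1)); rewrite toZ_ofZ //; split=> //.
    by apply/(fib_iff _ _ ef); rewrite toZ_ofZ // te.
  - exists (ofZ (Negz (fo eps w))); rewrite toZ_ofZ //; split=> //.
    apply/(fib_iff _ _ ef); rewrite toZ_ofZ // te /= hn'; lia.
split.
- move=> [[d0 [fd0 ad0]] hall].
  have [fm l0] := lower d0 fd0.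
  have [d1 [fd1 ad1]] := upper fm.
  have := hall d1 fd1; lia.
- move=> [fm ->]; have [d1 [fd1 ad1]] := upper fm; split.
    by exists d1.
  by move=> d /lower [_ h].
Qed.

Lemma init_in_iff f (e : elt n) (eps : nat) : equivar f -> toZ e = Posz eps -> (0 < eps)%N ->
  init_in (fib f e) <-> (fo eps (intword f) < m)%N /\ nth 0%R (intword f) (fo eps (intword f)) = Posz eps.
Proof.
move=> ef te ep; split.
- move=> [k [/(init_iff _ ef te ep) [fm ->] [d [/(fib_iff _ _ ef) fd td]]]].
  split=> //; by rewrite td te in fd.
- move=> [fm hn]; exists (fo eps (intword f)).+1; split; first by apply/(init_iff _ ef te ep).
  exists (ofZ (Posz (fo eps (intword f)).+1)); rewrite toZ_ofZ //; split=> //.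
  by apply/(fib_iff _ _ ef); rewrite toZ_ofZ // te.
Qed.

Lemma isOSB_iff f : isOSB f <-> equivar f /\ Crel 0 n (intword f).
Proof.
have sw := size_intword f.
split.
- move=> [surj [eqv [i1 i2]]]; split=> //.
  have B : forall e, (0 < e <= n)%N -> (fo e (intword f) < size (intword f))%N /\
                nth 0%R (intword f) (fo e (intword f)) = Posz e.
    move=> e He; have te : toZ (ofZ (m:=n) (Posz e)) = Posz e by rewrite toZ_ofZ //; lia.
    have := i1 (ofZ (Posz e)); rewrite te => /(_ ltac:(lia)).
    by move/(init_in_iff eqv te ltac:(lia)) => [fm hn]; rewrite sw.
  split; [|split] => //.
  + by apply/allP => z /mapP [i _ ->]; exact: toZ_bound.
  + move=> e e' ep He.
    have te : toZ (ofZ (m:=n) (Posz e)) = Posz e by rewrite toZ_ofZ //; lia.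
    have te' : toZ (ofZ (m:=n) (Posz e')) = Posz e' by rewrite toZ_ofZ //; lia.
    have [b1 _] := B e ltac:(lia); have [b1' _] := B e' ltac:(lia).
    rewrite sw in b1 b1'.
    have := i2 (ofZ (Posz e)) (ofZ (Posz e')); rewrite te te' => /(_ ltac:(lia) ltac:(lia)).
    move=> /(_ (fo e (intword f)).+1 (fo e' (intword f)).+1).
    rewrite !(init_iff _ eqv te) ?(init_iff _ eqv te') //; try lia.
- move=> [eqv [A [B C]]]; rewrite sw in B; split; [|split; [done|split]].
  + move=> j; have jb := toZ_bound j.
    case Ej: (toZ j) jb => [[|k]|k] jb.
    * exists (ofZ (Posz 0)); apply: toZ_inj; by rewrite fE // toZ_ofZ // Ej.
    * have [b1 b2] := B k.+1 ltac:(lia).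
      exists (ofZ (Posz (fo k.+1 (intword f)).+1)); apply: toZ_inj.
      by rewrite fE // toZ_ofZ // Ej /= b2.
    * have [b1 b2] := B k.+1 ltac:(lia).
      exists (ofZ (Negz (fo k.+1 (intword f)))); apply: toZ_inj.
      rewrite fE // toZ_ofZ // Ej /= b2; lia.
  + move=> e ep; have te : toZ e = Posz (absz (toZ e)) by lia.
    apply/(init_in_iff eqv te); first lia.
    have := toZ_bound e; move=> eb; apply: B; lia.
  + move=> e e' ep ee' k k'.
    have te : toZ e = Posz (absz (toZ e)) by lia.
    have te' : toZ e' = Posz (absz (toZ e')) by lia.
    rewrite (init_iff _ eqv te) ?(init_iff _ eqv te'); try lia.
    move=> [_ ->] [_ ->]; have := C (absz (toZ e)) (absz (toZ e')).
    have := toZ_bound e'; lia.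
Qed.

End Trans.

Lemma exts_opp (y : seq int) z : exts y (- z)%R = (- exts y z)%R.
Proof. case: z => [[|k]|k] //=; by rewrite ?opprK. Qed.

Lemma exts_bound (y : seq int) m z : all (fun x : int => (absz x <= m)%N) y ->
  (absz (exts y z) <= m)%N.
Proof.
move=> H; rewrite abs_exts; case: eqP => // _.
case: (ltnP (absz z).-1 (size y)) => h; first by apply: (allP H); apply: mem_nth.
by rewrite nth_default.
Qed.

Definition mkf (p m : nat) (y : seq int) : {ffun elt p -> elt m} :=
  [ffun d => ofZ (exts y (toZ d))].

Lemma mkf_equiv p m y : all (fun x : int => (absz x <= m)%N) y -> equivar (mkf p m y).
Proof.
move=> H d; rewrite !ffunE toZ_sigma exts_opp sigma_ofZ //; exact: exts_bound.
Qed.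

Lemma mkf_word p m y : all (fun x : int => (absz x <= m)%N) y -> size y = p ->
  intword (mkf p m y) = y.
Proof.
move=> H sy; apply: (@eq_from_nth _ 0%R); first by rewrite size_intword.
move=> k; rewrite size_intword => kp; rewrite nth_intword // ffunE (@toZ_ofZ p (Posz k.+1)); last by [].
by rewrite toZ_ofZ //; apply: exts_bound.
Qed.

Lemma compB_equiv p m n (f : {ffun elt m -> elt n}) (h : {ffun elt p -> elt m}) :
  equivar f -> equivar h -> equivar (compB f h).
Proof. by move=> ef eh d; rewrite !ffunE eh ef. Qed.

Lemma compB_word p m n (f : {ffun elt m -> elt n}) (h : {ffun elt p -> elt m}) :
  equivar f -> intword (compB f h) = map (exts (intword f)) (intword h).
Proof.
move=> ef; rewrite /intword -map_comp; apply: eq_map => i /=; by rewrite ffunE fE.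
Qed.

Lemma iota_wordE n (a : arr n) : map toZ (iota_word a) = intword (projT2 a).
Proof.
case: a => m f; rewrite /iota_word /intword /= -map_comp; apply: eq_map => k /=.
by rewrite /ofZ /= addnC.
Qed.

Lemma Gd_size d k y : Gd d k y -> (d <= size y)%N.
Proof.
elim: d k y => [|d IH] k y //= [y1 [y2 [-> [_ /IH h]]]].
rewrite size_cat /=; lia.
Qed.

Lemma Gd_exact d k y : Gd d k y -> size y = d -> y = map Posz (iota k.+1 d).
Proof.
elim: d k y => [|d IH] k y /=.
  by case: y.
move=> [y1 [y2 [-> [_ G]]]]; have := Gd_size G.
case: y1 => [|z y1] /=; last by rewrite size_cat /=; lia.
by move=> _ [/(IH _ _ G) ->].
Qed.

Lemma Gd_iota d k : Gd d k (map Posz (iota k.+1 d)).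
Proof.
elim: d k => [|d IH] k //=.
by exists [::], (map Posz (iota k.+2 d)); split.
Qed.

Lemma Crel_Gd n y : Crel 0 n y <-> Gd n 0 y.
Proof. by rewrite Gd_Crel add0n. Qed.

Lemma id_OSB n : isOSB ([ffun i => i] : {ffun elt n -> elt n}).
Proof.
apply/isOSB_iff; split; first by move=> d; rewrite !ffunE.
have -> : intword ([ffun i => i] : {ffun elt n -> elt n}) = map Posz (iota 1 n).
  rewrite /intword; apply/eq_in_map => i; rewrite mem_iota => hi; rewrite ffunE toZ_ofZ //; lia.
apply/Crel_Gd; exact: Gd_iota.
Qed.

Lemma directed n (f : {ffun elt n -> elt n}) : isOSB f -> f = [ffun i => i].
Proof.
move=> /isOSB_iff [ef /Crel_Gd G].
apply: ext_det => //; first by move=> d; rewrite !ffunE.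
have [_ /Crel_Gd G'] := (proj1 (isOSB_iff _) (id_OSB n)).
by rewrite (Gd_exact G) ?size_intword // (Gd_exact G') ?size_intword.
Qed.

Lemma compB_id p n (f : {ffun elt p -> elt n}) : compB f [ffun i => i] = f.
Proof. by apply/ffunP => d; rewrite !ffunE. Qed.

Lemma arr_le_len n (a b : arr n) : arr_le a b -> (projT1 a <= projT1 b)%N.
Proof.
case: a b => m f [p g] [h [/isOSB_iff [eh /Crel_Gd G] _]] /=.
by have := Gd_size G; rewrite size_intword.
Qed.

Lemma arr_le_eqlen n (a b : arr n) : arr_le a b -> projT1 a = projT1 b -> a = b.
Proof.
case: a b => m f [p g] [h [hO E]] /= mp; subst p.
by rewrite /= (directed hO) compB_id in E; rewrite E.
Qed.

Lemma arr_le_refl n (a : arr n) : arr_le a a.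
Proof. case: a => m f; exists [ffun i => i]; by rewrite compB_id; split=> //; exact: id_OSB. Qed.

Lemma arr_le_L n (s a : arr n) : valid s -> valid a ->
  arr_le s a <-> Lrec [::] (iota_word s) (iota_word a).
Proof.
case: s a => m fs [p fa]; rewrite /valid /= => /isOSB_iff [es Cs] /isOSB_iff [ea Ca].
rewrite Lrec_G /= iota_wordE /= iota_wordE /=.
have ->: size (iota_word (existT _ m fs)) = m by rewrite /iota_word size_map size_iota.
split.
- move=> [h [/isOSB_iff [eh Ch] E]]; exists (intword h); split; first exact/Crel_Gd.
  by rewrite /= in E; rewrite E compB_word.
- move=> [y [G E]].
  have [Ay _] := proj2 (Crel_Gd _ _) G.
  have sy : size y = p by rewrite -(size_intword fa) E size_map.
  exists (mkf p m y); split.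
    apply/isOSB_iff; split; first exact: mkf_equiv.
    by rewrite mkf_word //; exact/Crel_Gd.
  apply: ext_det => //=; first by apply: compB_equiv => //; exact: mkf_equiv.
  by rewrite compB_word // mkf_word.
Qed.

Lemma L_valid n (s : arr n) (v : seq (elt n)) : valid s -> Lrec [::] (iota_word s) v ->
  exists a : arr n, valid a /\ iota_word a = v /\ arr_le s a.
Proof.
move=> vs L.
have [y [G E]] := proj1 (Lrec_G _ _ _) L.
have Es := iota_wordE s; rewrite /= Es in E.
have Av : all (fun x : int => (absz x <= n)%N) (map toZ v).
  by apply/allP => z /mapP [c _ ->]; exact: toZ_bound.
set a : arr n := existT _ (size v) (mkf (size v) n (map toZ v)).
have wa : intword (projT2 a) = map toZ v by rewrite mkf_word // size_map.
have va : valid a.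
  apply/isOSB_iff; split; first exact: mkf_equiv.
  rewrite wa E; move: vs => /isOSB_iff [es Cs].
  apply: (@Crel_comp n (projT1 s)) => //; first by rewrite size_intword.
  apply/Crel_Gd; move: G; rewrite /iota_word size_map size_iota //.
have iw : iota_word a = v.
  by apply: (@inj_map _ _ toZ (@toZ_inj n)); rewrite iota_wordE wa.
exists a; split=> //; split=> //; apply/arr_le_L => //; by rewrite iw.
Qed.

Fixpoint lexlt (u u' : seq int) : bool :=
  match u, u' with
  | c :: u1, c' :: u1' => (c < c')%R || ((c == c') && lexlt u1 u1')
  | _, _ => false
  end.

Lemma lexlt_irr u : lexlt u u = false.
Proof. elim: u => //= c u ->; by rewrite ltxx eqxx. Qed.

Lemma lexlt_trans u1 u2 u3 : lexlt u1 u2 -> lexlt u2 u3 -> lexlt u1 u3.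
Proof.
elim: u1 u2 u3 => [|a u1 IH] [|b u2] [|c u3] //=.
case/orP => [ab|/andP [/eqP <- l12]]; case/orP => [bc|/andP [/eqP <- l23]].
- by rewrite (lt_trans ab bc).
- by rewrite ab.
- by rewrite bc.
- by rewrite (IH _ _ l12 l23) eqxx orbT.
Qed.

Lemma lexlt_total u u' : size u = size u' -> [\/ u = u', lexlt u u' | lexlt u' u].
Proof.
elim: u u' => [|a u IH] [|b u'] //=; first by constructor.
move=> [] /IH.
case: (ltgtP a b) => [ab|ba|<-] H.
- by apply: Or32.
- by apply: Or33.
- case: H => [->|h|h]; [by constructor| apply: Or32 | apply: Or33]; by rewrite /= ?eqxx h ?orbT.
Qed.

Lemma lexlt_cat p x x' : lexlt (p ++ x) (p ++ x') = lexlt x x'.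
Proof. elim: p => //= c p ->; by rewrite ltxx eqxx. Qed.

Lemma lexlt_split u u' : lexlt u u' ->
  exists i, (forall j, (j < i)%N -> nth 0%R u j = nth 0%R u' j) /\
            (i < size u)%N /\ (nth 0%R u i < nth 0%R u' i)%R.
Proof.
elim: u u' => [|a u IH] [|b u'] //=.
case/orP => [ab|/andP [/eqP <- /IH [i [H1 [H2 H3]]]]].
  by exists 0%N; split=> //; split=> //.
exists i.+1; split; last by split.
by move=> [|j] //= /H1.
Qed.

Lemma exts_agree (u u' : seq int) i z :
  (forall j, (j < i)%N -> nth 0%R u j = nth 0%R u' j) -> (absz z <= i)%N ->
  exts u z = exts u' z.
Proof.
move=> H; case: z => [[|k]|k] //= zi; rewrite H //.
Qed.

Lemma Gd_lex d k y (u u' : seq int) i :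
  Gd d k y -> (k <= i < k + d)%N ->
  (forall j, (j < i)%N -> nth 0%R u j = nth 0%R u' j) -> (nth 0%R u i < nth 0%R u' i)%R ->
  lexlt (map (exts u) y) (map (exts u') y).
Proof.
elim: d k y => [|d IH] k y /=; first lia.
move=> [y1 [y2 [-> [A1 G2]]]] ki Hj Hi.
rewrite !map_cat.
have -> : map (exts u) y1 = map (exts u') y1.
  apply/eq_in_map => z zy; apply: (exts_agree Hj); have := allP A1 z zy; lia.
rewrite lexlt_cat /=.
case: (ltngtP k i) => h; last first.
- by subst i; rewrite Hi.
- lia.
- rewrite (Hj k h) ltxx eqxx /=.
  apply: (IH k.+1) => //; lia.
Qed.

Section G1.
Variable n : nat.

Definition ltA (a b : arr n) : Prop :=
  (projT1 a < projT1 b)%N \/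
  (projT1 a = projT1 b /\ lexlt (intword (projT2 a)) (intword (projT2 b))).

Definition BB := n.*2.+1.

Fixpoint valN (u : seq int) : nat :=
  match u with [::] => 0%N | c :: u' => (absz (c + Posz n)%R * BB ^ size u' + valN u')%N end.

Lemma valN_lt u : all (fun z : int => (absz z <= n)%N) u -> (valN u < BB ^ size u)%N.
Proof.
elim: u => [|c u IH] //= /andP [hc /IH h].
rewrite expnS; have : (absz (c + Posz n)%R < BB)%N by rewrite /BB; lia.
move: h; set X := BB ^ size u; set a := absz _; nia.
Qed.

Lemma lexlt_val u u' : size u = size u' -> all (fun z : int => (absz z <= n)%N) u ->
  all (fun z : int => (absz z <= n)%N) u' -> lexlt u u' -> (valN u < valN u')%N.
Proof.
elim: u u' => [|c u IH] [|c' u'] //= [su] /andP [hc hu] /andP [hc' hu'].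
case/orP => [cc|/andP [/eqP <- /(IH _ su hu hu') h]]; last by rewrite su; lia.
have := valN_lt hu; rewrite su.
have : (absz (c + Posz n)%R < absz (c' + Posz n)%R)%N by lia.
set X := BB ^ size u'; set a := absz (c + _)%R; set a' := absz (c' + _)%R; nia.
Qed.

Lemma valid_word (a : arr n) : valid a ->
  all (fun z : int => (absz z <= n)%N) (intword (projT2 a)).
Proof. by move=> _; apply/allP => z /mapP [i _ ->]; exact: toZ_bound. Qed.

Lemma ltA_wo : well_order_on (@valid n) ltA.
Proof.
split; [|split; [|split]].
- case=> m f _ [|[_]] /=; by rewrite ?ltnn ?lexlt_irr.
- case=> m1 f1 [m2 f2] [m3 f3] _ _ _ [h12|[e12 l12]] [h23|[e23 l23]]; rewrite /ltA /=; simpl in *.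
  + left; lia.
  + left; lia.
  + left; lia.
  + right; split; [congruence|]; subst; exact: lexlt_trans l12 l23.
- case=> m1 f1 [m2 f2] /isOSB_iff [e1 _] /isOSB_iff [e2 _].
  case: (ltngtP m1 m2) => h; [by right; left; left | by right; right; left |].
  subst m2; have := @lexlt_total (intword f1) (intword f2); rewrite !size_intword.
  case=> // [E|l|l]; [left | right; left; right | right; right; right] => //.
  by have -> : f1 = f2 by apply: ext_det.
- have main : forall L V (a : arr n), valid a -> projT1 a = L -> valN (intword (projT2 a)) = V ->
      Acc (fun x y => valid x /\ valid y /\ ltA x y) a.
    elim/ltn_ind => L IHL; elim/ltn_ind => V IHV a va La Va; constructor => x [vx [_ l]].
    case: l => [h|[h l]].
      by apply: (IHL (projT1 x) _ _ x vx erefl erefl); rewrite -La.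
    apply: (IHV (valN (intword (projT2 x))) _ x vx _ erefl); last by rewrite h.
    rewrite -Va; apply: lexlt_val => //; try exact: valid_word.
    by rewrite !size_intword h.
  by move=> a va; exact: main.
Qed.


End G1.

Lemma G1 : OSBop_G1.
Proof.
move=> n; exists (@ltA n); split; first exact: ltA_wo.
move=> m p f g h /isOSB_iff [ef _] /isOSB_iff [eg _] /isOSB_iff [eh /Crel_Gd G].
case=> [|[_ /= l]]; first by rewrite /= ltnn.
right; split=> //=.
rewrite !compB_word //.
have [i [H1 [H2 H3]]] := lexlt_split l.
rewrite size_intword in H2.
apply: (Gd_lex G _ H1 H3); lia.
Qed.

Section Higman.
Variable T : finType.

Definition bad (g : nat -> seq T) := forall i j, (i < j)%N -> ~~ subseq (g i) (g j).
Definition Pp (pref : seq (seq T)) :=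
  exists g, bad g /\ forall i, (i < size pref)%N -> g i = nth [::] pref i.

Definition nxt (pref : seq (seq T)) : seq T :=
  epsilon (inhabits [::]) (fun x => Pp (rcons pref x) /\ forall y, Pp (rcons pref y) -> (size x <= size y)%N).

Lemma nxt_spec pref : Pp pref ->
  Pp (rcons pref (nxt pref)) /\ forall y, Pp (rcons pref y) -> (size (nxt pref) <= size y)%N.
Proof.
move=> [g [bg Hg]].
have ex : exists x, Pp (rcons pref x).
  exists (g (size pref)), g; split=> // i; rewrite size_rcons ltnS leq_eqVlt.
  case/orP => [/eqP ->|h]; first by rewrite nth_rcons ltnn eqxx.
  by rewrite nth_rcons h Hg.
have gen : forall k x, size x = k -> Pp (rcons pref x) ->
    exists x, Pp (rcons pref x) /\ forall y, Pp (rcons pref y) -> (size x <= size y)%N.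
  elim/ltn_ind => k IH x sx Px.
  case: (classic (exists y, Pp (rcons pref y) /\ (size y < k)%N)) => [[y [Py sy]]|H].
    exact: (IH (size y) sy y erefl Py).
  exists x; split=> // y Py; rewrite sx leqNgt; apply/negP => sy; apply: H; by exists y.
have [x Px] := ex; exact: (epsilon_spec (inhabits [::]) _ (gen _ x erefl Px)).
Qed.

Fixpoint pref (k : nat) : seq (seq T) :=
  match k with 0 => [::] | k'.+1 => rcons (pref k') (nxt (pref k')) end.

Definition gg (i : nat) := nxt (pref i).


Lemma prefE k : pref k = map gg (iota 0 k).
Proof.
elim: k => // k IH.
rewrite -addn1 iotaD map_cat add0n -IH /= cats1 addn1 //.
Qed.

Lemma nth_pref k i : (i < k)%N -> nth [::] (pref k) i = gg i.
Proof. by move=> ik; rewrite prefE (nth_map 0%N) ?size_iota // nth_iota. Qed.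

Lemma size_pref k : size (pref k) = k.
Proof. by rewrite prefE size_map size_iota. Qed.

Hypothesis P0 : Pp [::].

Lemma P_pref k : Pp (pref k).
Proof. elim: k => //= k IH; exact: (nxt_spec IH).1. Qed.

Lemma gg_bad : bad gg.
Proof.
move=> i j ij; have [h [bh Hh]] := P_pref j.+1.
rewrite -(nth_pref (ltn_trans ij (ltnSn j))) -(nth_pref (ltnSn j)).
rewrite -!Hh ?size_pref //; [exact: bh | exact: ltn_trans ij (ltnSn j)].
Qed.

Lemma gg_nil k : gg k <> [::].
Proof. move=> H; have := gg_bad (ltnSn k); by rewrite H sub0seq. Qed.

Lemma higman_contra : False.
Proof.
have [x0 _] : exists x0 : T, True.
  by case E: (gg 0) (@gg_nil 0) => [//|x s] _; exists x.
pose a k := head x0 (gg k).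
pose t k := behead (gg k).
have gE : forall k, gg k = a k :: t k.
  by move=> k; rewrite /a /t; case: (gg k) (@gg_nil k).
have [a0 inf] : exists a0, forall N, exists k, (N <= k)%N /\ a k = a0.
  apply: NNPP => H.
  have H' : forall a0, exists N, forall k, (N <= k)%N -> a k <> a0.
    move=> a0; apply: NNPP => H1; apply: H; exists a0 => N; apply: NNPP => H2.
    apply: H1; exists N => k Nk Ek; apply: H2; by exists k.
  pose Nf a0 := epsilon (inhabits 0%N) (fun N => forall k, (N <= k)%N -> a k <> a0).
  have Nfs : forall a0 k, (Nf a0 <= k)%N -> a k <> a0.
    move=> a0; exact: (epsilon_spec (inhabits 0%N) _ (H' a0)).
  pose M := (\max_(x : T) Nf x)%N.
  by apply: (Nfs (a M) M); first exact: leq_bigmax.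
pose kk N := epsilon (inhabits 0%N) (fun k => (N <= k)%N /\ a k = a0).
have kks : forall N, (N <= kk N)%N /\ a (kk N) = a0.
  move=> N; exact: (epsilon_spec (inhabits 0%N) _ (inf N)).
pose K := fix K i := match i with 0 => kk 0%N | i'.+1 => kk (K i').+1 end.
have Kinc : forall i, (K i < K i.+1)%N by move=> i; exact: (kks _).1.
have Klt : forall i j, (i < j)%N -> (K i < K j)%N.
  move=> i j; elim: j => // j IH; rewrite ltnS leq_eqVlt => /orP [/eqP ->|h] //.
  exact: ltn_trans (IH h) (Kinc j).
have Kge : forall i, (K 0 <= K i)%N.
  by case=> // i; apply: ltnW; apply: Klt.
have Ka : forall i, a (K i) = a0 by case=> [|i]; exact: (kks _).2.
set K0 := K 0 in Kge.
pose h i := if (i < K0)%N then gg i else t (K (i - K0)).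
have hbad : bad h.
  move=> i j ij; rewrite /h.
  case: (ltnP i K0) => hi; case: (ltnP j K0) => hj.
  - exact: gg_bad.
  - apply/negP => sub.
    have : subseq (gg i) (gg (K (j - K0))).
      by apply: (subseq_trans sub); rewrite gE; exact: subseq_cons.
    apply/negP; apply: gg_bad; exact: leq_trans hi (Kge _).
  - by exfalso; move: (leq_ltn_trans hi ij); rewrite ltnNge (ltnW hj).
  - apply/negP => sub.
    have : subseq (gg (K (i - K0))) (gg (K (j - K0))).
      by rewrite !gE !Ka /= eqxx.
    apply/negP; apply: gg_bad; apply: Klt; rewrite ltn_sub2r //; exact: leq_ltn_trans hi ij.
have Ph : Pp (rcons (pref K0) (t K0)).
  exists h; split=> // i; rewrite size_rcons size_pref ltnS leq_eqVlt => /orP [/eqP ->|hi].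
    by rewrite nth_rcons size_pref ltnn eqxx /h ltnn subnn.
  by rewrite nth_rcons size_pref hi nth_pref // /h hi.
have := (nxt_spec (P_pref K0)).2 _ Ph.
rewrite -/(gg K0) gE /=; by rewrite ltnn.
Qed.

End Higman.

Lemma higman (T : finType) (f : nat -> seq T) : exists i j, (i < j)%N /\ subseq (f i) (f j).
Proof.
apply: NNPP => H.
have bf : bad f.
  move=> i j ij; apply/negP => s; apply: H; by exists i, j.
have P0 : @Pp T [::] by exists f.
exact: (higman_contra P0).
Qed.

Section Enc.
Variable n : nat.

Fixpoint enc_from (B : {set elt n}) (v : seq (elt n)) : seq (elt n * {set elt n}) :=
  match v with
  | [::] => [::]
  | c :: v' => (c, B) :: enc_from (c |: B) v'
  end.

Lemma split_enc v B x E : subseq (x :: E) (enc_from B v) ->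
  exists v1 c v2, v = v1 ++ c :: v2 /\ x = (c, B :|: [set:: v1]) /\
                  subseq E (enc_from (c |: (B :|: [set:: v1])) v2).
Proof.
elim: v B => [|d v IH] B //=.
case: ifP => [/eqP -> s|_ /IH [v1 [c [v2 [-> [-> s]]]]]].
  by exists [::], d, v; rewrite set_nil setU0.
exists (d :: v1), c, v2; split=> //.
have eq : d |: B :|: [set:: v1] = B :|: [set:: d :: v1].
  by apply/setP => z; rewrite !inE ?in_cons; case: (z == d); case: (z \in B).
by rewrite -eq; split.
Qed.

Lemma enc_L (rest pre v : seq (elt n)) :
  subseq (enc_from [set:: pre] rest) (enc_from [set:: pre] v) ->
  all (Sig (pre ++ rest)) v -> Lrec pre rest v.
Proof.
elim: rest pre v => [|c rest IH] pre v /=.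
  by rewrite cats0.
move=> /split_enc [v1 [c' [v2 [-> [[<- eS] s2]]]]].
rewrite all_cat /= => /and3P [a1 _ a2].
exists v1, v2; split=> //; split.
  apply/allP => d dv; apply/orP; right; apply/hasP; exists d => //.
  have h : d \in [set:: pre] :|: [set:: v1] by rewrite in_setU [d \in [set:: v1]]inE dv orbT.
  by rewrite -eS inE in h.
apply: IH.
  have -> : [set:: rcons pre c] = c |: [set:: pre].
    by apply/setP => z; rewrite !inE mem_rcons in_cons.
  by rewrite -eS in s2.
by rewrite cat_rcons.
Qed.
End Enc.

Definition dec (P : Prop) : bool := if excluded_middle_informative P then true else false.
Lemma decP (P : Prop) : dec P = true <-> P.
Proof. by rewrite /dec; case: excluded_middle_informative. Qed.

Lemma arr_le_trans n (a b c : arr n) : arr_le a b -> arr_le b c -> arr_le a c.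
Proof.
case: a b c => m1 f1 [m2 f2] [m3 f3] [h1 [O1 E1]] [h2 [O2 E2]] /=; simpl in *.
exists (compB h1 h2); split.
  move: O1 O2 => /isOSB_iff [e1 C1] /isOSB_iff [e2 C2].
  apply/isOSB_iff; split; first exact: compB_equiv.
  rewrite compB_word //; apply: (Crel_comp _ C1 C2); exact: size_intword.
by rewrite E2 E1; apply/ffunP => d; rewrite !ffunE.
Qed.

Lemma Sig_all n (s : arr n) c : valid s -> Sig (iota_word s) c.
Proof.
case: s => m f /isOSB_iff [ef [_ [B _]]]; rewrite /Sig.
case: eqP => //= hc; apply/hasP.
have cb := toZ_bound c.
have [b1 b2] := B (absz (toZ c)) ltac:(lia).
rewrite size_intword in b1.
exists (nth ord0 (iota_word (existT _ m f)) (fo (absz (toZ c)) (intword f))).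
  by apply: mem_nth; rewrite /iota_word size_map size_iota.
have := iota_wordE (existT _ m f); rewrite /= => E.
rewrite -(nth_map ord0 0%R); last by rewrite /iota_word size_map size_iota.
by rewrite E b2.
Qed.

Lemma enc_le n (s a : arr n) : valid s -> valid a ->
  subseq (enc_from set0 (iota_word s)) (enc_from set0 (iota_word a)) -> arr_le s a.
Proof.
move=> vs va sub; apply/arr_le_L => //; apply: enc_L; first by rewrite set_nil.
by apply/allP => c _; exact: Sig_all.
Qed.

Section G2.
Variables (n : nat) (I : arr n -> Prop).
Hypothesis uI : upclosed I.

Lemma min_eq a b : minimal_in I a -> minimal_in I b -> arr_le a b -> a = b.
Proof.
move=> [Ia ma] [Ib mb] ab; have ba := mb a Ia ab.
have := arr_le_len ab; have := arr_le_len ba => h1 h2.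
by apply: (arr_le_eqlen ab); apply/eqP; rewrite eqn_leq h1 h2.
Qed.

Lemma list_min L : exists S : seq (arr n), (forall s, s \in S -> minimal_in I s) /\
   (forall a, minimal_in I a -> (projT1 a < L)%N -> a \in S).
Proof.
elim: L => [|L [S [H1 H2]]]; first by exists [::].
exists (S ++ [seq (existT (fun m => {ffun elt m -> elt n}) L f : arr n) |
           f <- enum {ffun elt L -> elt n} & dec (minimal_in I (existT _ L f))]).
split.
- move=> s; rewrite mem_cat => /orP [/H1 //|/mapP [f]].
  by rewrite mem_filter => /andP [/decP h _] ->.
- move=> [m f] ma /=; rewrite ltnS leq_eqVlt => /orP [/eqP e|h].
    subst m; rewrite mem_cat; apply/orP; right; apply: map_f.
    by rewrite mem_filter mem_enum andbT; apply/decP.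
  by rewrite mem_cat H2.
Qed.

Lemma exists_min L a : projT1 a = L -> I a -> exists s, minimal_in I s /\ arr_le s a.
Proof.
elim/ltn_ind: L a => L IH a La Ia.
case: (classic (minimal_in I a)) => [ma|nma]; first by exists a; split=> //; exact: arr_le_refl.
have [b [Ib [ba nab]]] : exists b, I b /\ arr_le b a /\ ~ arr_le a b.
  apply: NNPP => H; apply: nma; split=> // b Ib ba; apply: NNPP => nab; apply: H; by exists b.
have lb : (projT1 b < L)%N.
  have := arr_le_len ba; rewrite leq_eqVlt => /orP [/eqP e|]; last by rewrite La.
  by have := arr_le_eqlen ba e => E; subst b; case: nab; exact: arr_le_refl.
have [s [ms sb]] := IH _ lb b erefl Ib.
by exists s; split=> //; exact: arr_le_trans sb ba.
Qed.

Lemma G2list : exists S : seq (arr n), (forall s, s \in S -> minimal_in I s) /\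
   (forall a, minimal_in I a -> a \in S).
Proof.
case: (classic (exists L, forall a, minimal_in I a -> (projT1 a < L)%N)) => [[L HL]|H].
  have [S [H1 H2]] := list_min L; exists S; split=> // a ma; exact: H2 _ ma (HL a ma).
exfalso.
have H' : forall L, exists a, minimal_in I a /\ (L <= projT1 a)%N.
  move=> L; apply: NNPP => H1; apply: H; exists L => a ma; rewrite ltnNge; apply/negP => h.
  by apply: H1; exists a.
pose sel L := epsilon (inhabits (existT (fun m => {ffun elt m -> elt n}) 0%N [ffun _ => ord0] : arr n))
  (fun a => minimal_in I a /\ (L <= projT1 a)%N).
have sels : forall L, minimal_in I (sel L) /\ (L <= projT1 (sel L))%N.
  move=> L; exact: (epsilon_spec _ _ (H' L)).
pose A := fix A i := match i with 0 => sel 0%N | i'.+1 => sel (projT1 (A i')).+1 end.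
have Ainc : forall i, (projT1 (A i) < projT1 (A i.+1))%N by move=> i; exact: (sels _).2.
have Alt : forall i j, (i < j)%N -> (projT1 (A i) < projT1 (A j))%N.
  move=> i j; elim: j => // j IH; rewrite ltnS leq_eqVlt => /orP [/eqP ->|h] //.
  exact: ltn_trans (IH h) (Ainc j).
have Amin : forall i, minimal_in I (A i) by case=> [|i]; exact: (sels _).1.
have [i [j [ij sub]]] := higman (fun i => enc_from set0 (iota_word (A i))).
have vA : forall i, valid (A i) by move=> k; apply: uI.1; exact: (Amin k).1.
have := min_eq (Amin i) (Amin j) (enc_le (vA i) (vA j) sub).
move=> E; have := Alt i j ij; by rewrite E ltnn.
Qed.

Lemma G2n : exists S : seq (arr n),
      (forall s, s \in S -> minimal_in I s) /\
      (forall a, minimal_in I a -> exists2 s, s \in S & arr_equiv a s).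
Proof.
have [S [H1 H2]] := G2list; exists S; split=> // a ma.
by exists a; [exact: H2 | split; exact: arr_le_refl].
Qed.

Lemma OL_Lrec (pre rest : seq (elt n)) : ordered_lang (Lrec pre rest).
Proof.
elim: rest pre => [|c rest IH] pre /=.
  exact: (OL_star (Sig pre)).
apply: (OL_ext (L1 := fun u => exists u1 u2, u = u1 ++ u2 /\ all (Sig pre) u1 /\
           (exists u3 u4, u2 = u3 ++ u4 /\ u3 = [:: c] /\ Lrec (rcons pre c) rest u4))).
  move=> u; split.
    move=> [u1 [u2 [-> [a1 [u3 [u4 [-> [-> L]]]]]]]]; by exists u1, u4.
  move=> [v1 [v2 [-> [a1 L]]]]; exists v1, ([:: c] ++ v2); split=> //; split=> //.
  by exists [:: c], v2.
apply: OL_cat; first exact: (OL_star (Sig pre)).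
apply: OL_cat; [exact: OL_single | exact: IH].
Qed.

Lemma OL_union_list (S : seq (arr n)) :
  ordered_lang (fun w => exists s, s \in S /\ Lrec [::] (iota_word s) w).
Proof.
elim: S => [|s S IH].
  by apply: (OL_ext (L1 := fun _ => False)) => [u|]; [split=> // [[s []]] | exact: OL_empty].
apply: (OL_ext (L1 := fun u => Lrec [::] (iota_word s) u \/
                  exists s', s' \in S /\ Lrec [::] (iota_word s') u)).
  move=> u; split.
    case=> [L|[s' [s'S L]]]; [exists s | exists s']; by rewrite ?in_cons ?eqxx ?s'S ?orbT.
  move=> [s' []]; rewrite in_cons => /orP [/eqP ->|s'S] L; [left | right; exists s'] => //.
apply: OL_union => //; exact: OL_Lrec.
Qed.

Lemma lang_I : ordered_lang (fun w : seq (elt n) => exists a, I a /\ w = iota_word a).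
Proof.
have [S [H1 H2]] := G2list.
apply: (OL_ext (L1 := fun w => exists s, s \in S /\ Lrec [::] (iota_word s) w)); last first.
  exact: OL_union_list.
move=> w; split.
- move=> [s [sS L]]; have [Is _] := H1 s sS.
  have [a [va [<- sa]]] := L_valid (uI.1 s Is) L.
  by exists a; split=> //; apply: (uI.2 s a va Is sa).
- move=> [a [Ia ->]]; have [s [ms sa]] := exists_min erefl Ia.
  exists s; split; first exact: H2.
  by apply/arr_le_L => //; [exact: uI.1 (ms.1) | exact: uI.1].
Qed.
End G2.

Theorem mainTheorem10 : OSBop_Grobner /\ OSBop_Olingual_wrt_iota.
Proof.
split; [split; [|split]|].
- move=> n f; exact: directed.
- exact: G1.
- move=> n I uI; exact: G2n.
- move=> n; split; [|split].
  + case=> m f [p g] vf vg /= E.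
    have mp : m = p.
      by have := congr1 size E; rewrite /iota_word !size_map !size_iota.
    subst p.
    have := congr1 (map toZ) E; rewrite !iota_wordE /= => W.
    move: vf vg => /isOSB_iff [ef _] /isOSB_iff [eg _].
    have -> : f = g by apply: ext_det.
    by split; exact: arr_le_refl.
  + by case=> m f _; rewrite /iota_word size_map size_iota.
  + move=> I uI; exact: lang_I.
Qed.
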